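(* Let $a\geq 3$ be an integer. There is a bijective correspondence between pyramids of size $m\geq 1$ (with bottom piece covering $]0,a[$) and finite sequences $(p_1,p_2,\dots,p_r)$, $r\geq 1$, of pyramids together with integers $s_1,\dots,s_r$ such that $p_i$ is a right $s_i$-pyramid if $i$ is odd and a left $s_i$-pyramid if $i$ is even, $|p_1|+\dots+|p_r|=m$, $s_1=0$, and $$1\leq s_{i+1}-s_i\leq a-1 \text{ if } i \text{ is odd},\qquad 1\leq s_i-s_{i+1}\leq a-1 \text{ if } i \text{ is even}.$$
   Context: A piece is an open interval $]s,s+a[$ of the real line with $s\in\mathbb Z$; two pieces are concurrent iff their intervals intersect. A heap (in the sense of Viennot) is a finite configuration obtained by successively dropping pieces vertically towards the horizontal axis: each dropped piece comes to rest on the axis or on top of the highest previously placed piece whose interval intersects its own; configurations (not dropping orders) are what is counted. A heap is a pyramid if it has a unique bottom (minimal) piece, i.e. exactly one piece rests on the axis. The size $|p|$ is the number of pieces. A pyramid $p$ is a right $s$-pyramid if its bottom piece covers $]s,s+a[$ and is a leftmost piece of $p$ (no piece of $p$ covers $]t,t+a[$ with $t<s$); it is a left $s$-pyramid if its bottom piece covers $]s-a,s[$ and is a rightmost piece of $p$ (no piece of $p$ covers $]t-a,t[$ with $t>s$). *)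

(* Defs.v *)
From HB Require Import structures.
From mathcomp Require Import all_boot all_order all_algebra.
From mathcomp Require Import finmap.
Set Implicit Arguments. Unset Strict Implicit. Unset Printing Implicit Defensive.
Import Order.TTheory GRing.Theory Num.Theory.
Local Open Scope fset_scope.
Local Open Scope ring_scope.

(* A placed piece is a pair (s, h) : the piece covering ]s, s+a[ resting at
   level h (h = 0 : on the horizontal axis). A configuration is a finite set
   of placed pieces. *)
Definition piece := (int * nat)%type.
Definition config := {fset piece}.

(* ]s,s+a[ and ]t,t+a[ intersect iff |s - t| < a. *)
Definition concurrent (a : nat) (s t : int) : bool := `|s - t| < a%:Z.

Definition rest_level (a : nat) (c : config) (s : int) : nat :=
  (\max_(x <- enum_fset c | concurrent a x.1 s) x.2.+1)%N.

(* heap obtained by dropping the pieces of l, the LAST dropped piece being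
   the head of l *)
Fixpoint heap_of (a : nat) (l : seq int) : config :=
  match l with
  | [::] => fset0
  | s :: l' => (s, rest_level a (heap_of a l') s) |` heap_of a l'
  end.

Definition is_heap (a : nat) (H : config) : Prop := exists l, H = heap_of a l.

Definition hsize (H : config) : nat := #|` H|.

(* minimal pieces = pieces lying on the axis *)
Definition bottom_pieces (H : config) : config := [fset x in H | x.2 == 0%N].

Definition is_pyramid (a : nat) (H : config) : Prop :=
  is_heap a H /\ #|` bottom_pieces H| = 1%N.

Definition right_pyramid (a : nat) (s : int) (H : config) : Prop :=
  [/\ is_pyramid a H, (s, 0%N) \in H & forall x, x \in H -> s <= x.1].

(* left s-pyramid: bottom covers ]s-a,s[ and is a rightmost piece *)
Definition left_pyramid (a : nat) (s : int) (H : config) : Prop :=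
  [/\ is_pyramid a H, (s - a%:Z, 0%N) \in H & forall x, x \in H -> x.1 <= s - a%:Z].

Definition pyramid0 (a m : nat) (H : config) : Prop :=
  [/\ is_pyramid a H, (0, 0%N) \in H & hsize H = m].

Definition dflt : config * int := (fset0, 0).

(* sequences ((p_1,s_1),...,(p_r,s_r)); index i below is 0-based, so the
   paper's index i+1 is odd iff i is even *)
Definition good_seq (a m : nat) (q : seq (config * int)) : Prop :=
  [/\ (1 <= size q)%N,
      (forall i, (i < size q)%N ->
         if odd i then left_pyramid a (nth dflt q i).2 (nth dflt q i).1
         else right_pyramid a (nth dflt q i).2 (nth dflt q i).1),
      (\sum_(x <- q) hsize x.1)%N = m,
      (nth dflt q 0).2 = 0 &
      (forall i, (i.+1 < size q)%N ->
         let si := (nth dflt q i).2 in let sj := (nth dflt q i.+1).2 in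
         if odd i then 1 <= si - sj <= a%:Z - 1
         else 1 <= sj - si <= a%:Z - 1)].

Definition bij_between (X Y : Type) (P : X -> Prop) (Q : Y -> Prop) : Prop :=
  exists f : X -> Y,
    [/\ forall x, P x -> Q (f x),
        forall x y, P x -> P y -> f x = f y -> x = y &
        forall z, Q z -> exists2 x, P x & f x = z].

(* Main.v *)
Require Import Defs.
From HB Require Import structures.
From mathcomp Require Import all_boot all_order all_algebra.
From mathcomp Require Import finmap zify.
Set Implicit Arguments. Unset Strict Implicit. Unset Printing Implicit Defensive.
Import Order.TTheory GRing.Theory Num.Theory.
Local Open Scope fset_scope.
Local Open Scope ring_scope.

Section Basics.
Variable a : nat.
Hypothesis a_gt0 : (0 < a)%N.

Local Notation conc := (concurrent a).

Lemma conc_sym s t : conc s t = conc t s.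
Proof. by rewrite /concurrent distrC. Qed.

Lemma conc_refl s : conc s s.
Proof. rewrite /concurrent; lia. Qed.

Lemma rl_le (c : config) s n :
  (rest_level a c s <= n)%N = all (fun x => conc x.1 s ==> (x.2 < n)%N) (enum_fset c).
Proof.
apply/bigmax_leqP_seq/allP => H x xc.
- by apply/implyP => /(H x xc).
- by move=> cx; have := H x xc; rewrite cx.
Qed.

Lemma rl_leP (c : config) s n :
  reflect (forall x, x \in c -> conc x.1 s -> (x.2 < n)%N) (rest_level a c s <= n)%N.
Proof.
rewrite rl_le; apply: (iffP allP) => H x xc.
- by move=> cx; have := H x xc; rewrite cx.
- by apply/implyP => /(H x xc).
Qed.

Lemma rl_ge (c : config) s x : x \in c -> conc x.1 s -> (x.2 < rest_level a c s)%N.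
Proof. by move=> xc cx; apply: (@leq_bigmax_seq _ _ _ (fun x => x.2.+1) x). Qed.

Lemma bigmax_ex (T : eqType) (l : seq T) (P : pred T) (F : T -> nat) :
  (0 < (\max_(x <- l | P x) F x)%N)%N ->
  exists2 x, x \in l & P x /\ F x = (\max_(x <- l | P x) F x)%N.
Proof.
elim: l => [|y l IH] /=; first by rewrite big_nil.
rewrite big_cons; case: ifP => Py; last first.
  by move=> h; have [x xl [cx ex]] := IH h; exists x; [rewrite inE xl orbT|].
case: (leqP (F y) (\max_(x <- l | P x) F x)%N) => h.
  move=> h'; have [x xl [cx ex]] := IH h'.
  by exists x; [rewrite inE xl orbT|].
by move=> _; exists y => //; rewrite mem_head.
Qed.

Lemma rl_ex (c : config) s : (0 < rest_level a c s)%N ->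
  exists2 x, x \in c & conc x.1 s /\ (x.2).+1 = rest_level a c s.
Proof. by move=> /bigmax_ex [x xc [cx ex]]; exists x. Qed.

Definition AF (S : config) :=
  forall x y, x \in S -> y \in S -> conc x.1 y.1 -> x.2 = y.2 -> x = y.

Definition valid (H : config) :=
  (forall x, x \in H -> (0 < x.2)%N ->
     exists2 y, y \in H & conc y.1 x.1 /\ y.2 = (x.2).-1) /\ AF H.

Lemma valid0 : valid fset0.
Proof. by split=> [x|x y]; rewrite in_fset0. Qed.

Lemma valid_drop (H : config) s : valid H ->
  valid ((s, rest_level a H s) |` H).
Proof.
move=> [sup af]; split.
- move=> x; rewrite in_fset1U => /orP [/eqP -> /= hp|xH hp].
    have [y yH [cy ey]] := rl_ex hp.
    by exists y; [rewrite in_fset1U yH orbT | split => //; rewrite -ey].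
  have [y yH hy] := sup x xH hp.
  by exists y => //; rewrite in_fset1U yH orbT.
- move=> x y; rewrite !in_fset1U => /orP [/eqP ->|xH] /orP [/eqP ->|yH] //= cxy exy.
  + by move: (@rl_ge H s y yH); rewrite conc_sym cxy exy ltnn => /(_ isT).
  + by move: (@rl_ge H s x xH cxy); rewrite exy ltnn.
  + exact: af.
Qed.

Lemma heap_valid l : valid (heap_of a l).
Proof. elim: l => [|s l IH] /=; [exact: valid0 | exact: valid_drop]. Qed.

Lemma valid_heap (H : config) : valid H -> is_heap a H.
Proof.
move Hn : #|` H| => n; elim: n H Hn => [|n IH] H Hn vH.
  by exists [::]; apply/eqP; rewrite -cardfs_eq0 Hn.
have [x0 x0H] : exists x, x \in H.
  by apply/fset0Pn; rewrite -cardfs_gt0 Hn.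
pose M := (\max_(x <- enum_fset H) x.2)%N.
have Mge : forall x, x \in H -> (x.2 <= M)%N.
  by move=> x xH; apply: (@leq_bigmax_seq _ _ _ (fun x => x.2) x).
have [x xH xM] : exists2 x, x \in H & x.2 = M.
  case: (posnP M) => M0.
    by exists x0 => //; move: (Mge x0 x0H); rewrite M0; lia.
  by have [x xl [_ ex]] := bigmax_ex M0; exists x.
have [sup af] := vH.
pose H' := H `\ x.
have cH' : #|` H'| = n.
  by move: Hn; rewrite (cardfsD1 x) xH add1n => -[].
have vH' : valid H'.
  split.
  - move=> y; rewrite in_fsetD1 => /andP [yx yH] hp.
    have [z zH [cz ez]] := sup y yH hp.
    exists z => //; rewrite in_fsetD1 zH andbT.
    apply/eqP => zx; move: (Mge y yH); rewrite -xM -zx ez; lia.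
  - by move=> y z; rewrite !in_fsetD1 => /andP [_ yH] /andP [_ zH]; apply: af.
have [l el] := IH H' cH' vH'.
exists (x.1 :: l) => /=; rewrite -el.
have -> : rest_level a H' x.1 = x.2.
  apply/eqP; rewrite eqn_leq; apply/andP; split.
    apply/rl_leP => y; rewrite in_fsetD1 => /andP [yx yH] cy.
    rewrite ltn_neqAle xM Mge // andbT; apply/eqP => eyx.
    by move/eqP: yx; apply; apply: af => //; rewrite xM.
  case: (posnP x.2) => [-> //|hp].
  have [z zH [cz ez]] := sup x xH hp.
  have zH' : z \in H'.
    rewrite in_fsetD1 zH andbT; apply/eqP => zx; move: ez; rewrite zx; lia.
  have := rl_ge zH' cz; rewrite ez; lia.
by rewrite -surjective_pairing fsetD1K.
Qed.

Lemma heapP (H : config) : is_heap a H <-> valid H.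
Proof.
split; [by case=> l ->; apply: heap_valid | exact: valid_heap].
Qed.


Fixpoint lam (B S : config) (n : nat) (y : piece) : nat :=
  if n is n'.+1 then
    maxn (rest_level a B y.1)
      (\max_(z <- enum_fset S | conc z.1 y.1 && (z.2 < y.2)%N) (lam B S n' z).+1)%N
  else 0%N.

Lemma lam_fuel B S n : forall m y, (y.2 < n)%N -> (y.2 < m)%N -> lam B S n y = lam B S m y.
Proof.
elim: n => [|n IH] [|m] y //= hn hm; congr maxn.
apply: eq_bigr => z /andP [_ hz]; congr (_.+1); apply: IH; lia.
Qed.

Definition Lam B S y := lam B S (y.2).+1 y.

Lemma lamS B S n y : lam B S n.+1 y = maxn (rest_level a B y.1)
      (\max_(z <- enum_fset S | conc z.1 y.1 && (z.2 < y.2)%N) (lam B S n z).+1)%N.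
Proof. by []. Qed.

Lemma LamE B S y : Lam B S y = maxn (rest_level a B y.1)
  (\max_(z <- enum_fset S | conc z.1 y.1 && (z.2 < y.2)%N) (Lam B S z).+1)%N.
Proof.
rewrite {1}/Lam lamS; congr maxn; apply: eq_bigr => z /andP [_ hz].
by congr (_.+1); apply: lam_fuel => //; lia.
Qed.

Lemma Lam_rl B S y : (rest_level a B y.1 <= Lam B S y)%N.
Proof. by rewrite LamE leq_maxl. Qed.

Lemma Lam_lt B S y z : z \in S -> conc z.1 y.1 -> (z.2 < y.2)%N ->
  (Lam B S z < Lam B S y)%N.
Proof.
move=> zS czy hzy; rewrite [Lam B S y]LamE.
apply: leq_trans (leq_maxr _ _).
by apply: (@leq_bigmax_seq _ _ _ (fun z => (Lam B S z).+1) z) => //; rewrite czy.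
Qed.

Lemma Lam_le B S y n : (rest_level a B y.1 <= n)%N ->
  (forall z, z \in S -> conc z.1 y.1 -> (z.2 < y.2)%N -> (Lam B S z < n)%N) ->
  (Lam B S y <= n)%N.
Proof.
move=> h1 h2; rewrite LamE geq_max h1 /=.
apply/bigmax_leqP_seq => z zS /andP [c1 c2]; exact: h2.
Qed.

Lemma Lam_ex B S y : (0 < Lam B S y)%N ->
  rest_level a B y.1 = Lam B S y \/
  exists2 z, z \in S & [/\ conc z.1 y.1, (z.2 < y.2)%N & (Lam B S z).+1 = Lam B S y].
Proof.
rewrite [in X in X -> _]LamE [in X in _ \/ X]LamE.
case: (leqP (rest_level a B y.1)
  (\max_(z <- enum_fset S | conc z.1 y.1 && (z.2 < y.2)%N) (Lam B S z).+1)%N) => h.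
  move=> hp; right; have [z zS [/andP [c1 c2] ez]] := bigmax_ex hp.
  by exists z.
by move=> _; left; rewrite LamE (maxn_idPl (ltnW h)).
Qed.

Section AFS.
Variables (B : config) (S : config).
Hypothesis afS : AF S.

Lemma Lam_ltE y z : y \in S -> z \in S -> conc z.1 y.1 ->
  (Lam B S z < Lam B S y)%N = (z.2 < y.2)%N.
Proof.
move=> yS zS czy; case: (ltngtP z.2 y.2) => h.
- exact: Lam_lt.
- by apply/negbTE; rewrite -leqNgt ltnW // Lam_lt // conc_sym.
- by rewrite (afS zS yS czy h) ltnn.
Qed.

Lemma Lam_inj y z : y \in S -> z \in S -> y.1 = z.1 -> Lam B S y = Lam B S z -> y = z.
Proof.
move=> yS zS e1 eL; case: (ltngtP z.2 y.2) => h.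
- have c : conc z.1 y.1 by rewrite e1 conc_refl.
  by move: (@Lam_lt B S y z zS c h); rewrite eL ltnn.
- have c : conc y.1 z.1 by rewrite e1 conc_refl.
  by move: (@Lam_lt B S z y yS c h); rewrite eL ltnn.
- by apply: afS => //; rewrite e1 conc_refl.
Qed.

End AFS.

Definition img B S : config := [fset (y.1, Lam B S y) | y in S].

Lemma imgP B S w : reflect (exists2 y, y \in S & w = (y.1, Lam B S y)) (w \in img B S).
Proof. exact: imfsetP. Qed.

Lemma img_in B S y : y \in S -> (y.1, Lam B S y) \in img B S.
Proof. by move=> yS; apply/imgP; exists y. Qed.

Lemma card_img B S : AF S -> #|` img B S| = #|` S|.
Proof.
move=> afS; apply/eqP/card_in_imfsetP => y z yS zS e.
apply: (Lam_inj afS yS zS); [exact: (congr1 fst e) | exact: (congr1 snd e)].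
Qed.

Lemma img_notin B S w : w \in B -> w \notin img B S.
Proof.
move=> wB; apply/imgP => -[y yS ew].
have := @rl_ge B y.1 w wB; rewrite ew conc_refl /= => /(_ isT).
by rewrite ltnNge Lam_rl.
Qed.

Lemma valid_prod B S : valid B -> AF S -> valid (B `|` img B S).
Proof.
move=> [supB afB] afS; split.
- move=> w; rewrite in_fsetU => /orP [wB hp|/imgP [y yS ->] /= hp].
    have [v vB hv] := supB w wB hp.
    by exists v => //; rewrite in_fsetU vB.
  case: (Lam_ex hp) => [e|[z zS [czy hzy ez]]].
    rewrite -e in hp; have [v vB [cv ev]] := rl_ex hp.
    by exists v; [rewrite in_fsetU vB | split => //=; rewrite -e -ev].
  exists (z.1, Lam B S z); first by rewrite in_fsetU img_in ?orbT.
  by split => //; rewrite -ez.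
- move=> w v; rewrite !in_fsetU => /orP [wB|/imgP [y yS ->]] /orP [vB|/imgP [z zS ->]] /= cwv ewv.
  + exact: afB.
  + by move: (@rl_ge B z.1 w wB cwv); rewrite ewv ltnNge Lam_rl.
  + by move: (@rl_ge B y.1 v vB); rewrite conc_sym cwv -ewv ltnNge Lam_rl => /(_ isT).
  + case: (ltngtP z.2 y.2) => h.
    * have c : conc z.1 y.1 by rewrite conc_sym.
      by move: (@Lam_lt B S y z zS c h); rewrite ewv ltnn.
    * by move: (@Lam_lt B S z y yS cwv h); rewrite ewv ltnn.
    * by rewrite (@afS y z yS zS cwv (esym h)).
Qed.

Lemma card_prod B S : AF S -> #|` B `|` img B S| = (#|` B| + #|` S|)%N.
Proof.
move=> afS; have := cardfsUI B (img B S); rewrite (card_img B afS).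
suff -> : B `&` img B S = fset0 by rewrite cardfs0 addn0.
apply/fsetP => w; rewrite in_fsetI in_fset0; apply/negbTE.
by apply/negP => /andP [wB]; apply/negP/img_notin.
Qed.

Lemma Lam_transfer B C S : AF S -> forall y, y \in S ->
  Lam B (img C S) (y.1, Lam C S y) = Lam B S y.
Proof.
move=> afS; suff H : forall n y, (y.2 < n)%N -> y \in S ->
    Lam B (img C S) (y.1, Lam C S y) = Lam B S y by move=> y; apply: H (ltnSn _).
elim=> [//|n IH] y hn yS.
apply/eqP; rewrite eqn_leq; apply/andP; split.
- apply: Lam_le; first exact: Lam_rl.
  move=> w /imgP [z zS ->] /= czy hz.
  have hzy : (z.2 < y.2)%N by rewrite -(Lam_ltE C afS).
  rewrite IH //; [exact: Lam_lt | by rewrite ltnS in hn; exact: leq_trans hzy hn].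
- apply: Lam_le; first by rewrite (Lam_rl B (img C S) (y.1, Lam C S y)).
  move=> z zS czy hzy; rewrite -IH //; last by rewrite ltnS in hn; exact: leq_trans hzy hn.
  apply: (@Lam_lt _ _ (y.1, Lam C S y) (z.1, Lam C S z)) => //; first exact: img_in.
  exact: Lam_lt.
Qed.

Lemma img_img B C S : AF S -> img B (img C S) = img B S.
Proof.
move=> afS; apply/fsetP => w; apply/imgP/imgP => -[y].
- move=> /imgP [z zS ->] ->; exists z => //=; by rewrite Lam_transfer.
- move=> yS ->; exists (y.1, Lam C S y); first exact: img_in.
  by rewrite /= Lam_transfer.
Qed.

Definition downcl (p I : config) :=
  forall x y, x \in I -> y \in p -> conc y.1 x.1 -> (y.2 < x.2)%N -> y \in I.

Lemma Lam_id p I : valid p -> I `<=` p -> downcl p I -> forall y, y \in p `\` I ->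
  Lam I (p `\` I) y = y.2.
Proof.
move=> [sup af] /fsubsetP Ip dI.
suff H : forall n y, (y.2 < n)%N -> y \in p `\` I -> Lam I (p `\` I) y = y.2.
  by move=> y; apply: H (ltnSn _).
elim=> [//|n IH] y hn; rewrite in_fsetD => /andP [yI yp].
apply/eqP; rewrite eqn_leq; apply/andP; split.
- apply: Lam_le.
    apply/rl_leP => x xI cxy; case: (ltngtP x.2 y.2) => // h.
      by move: yI; rewrite (dI x y xI yp _ h) // conc_sym.
    have xp : x \in p by apply: Ip.
    by move: xI; rewrite (af x y xp yp cxy h) (negbTE yI).
  move=> z; rewrite in_fsetD => /andP [zI zp] czy hz.
  rewrite IH // ?in_fsetD ?zI ?zp //; rewrite ltnS in hn; exact: leq_trans hz hn.
- case: (posnP y.2) => [-> //|hp].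
  have [z zp [czy ez]] := sup y yp hp.
  have e : y.2 = z.2.+1 by rewrite ez prednK.
  case zI: (z \in I).
    rewrite e; exact: leq_trans (@rl_ge I y.1 z zI czy) (Lam_rl I (p `\` I) y).
  have zR : z \in p `\` I by rewrite in_fsetD zI zp.
  have hzy : (z.2 < y.2)%N by rewrite e.
  have := @Lam_lt I (p `\` I) y z zR czy hzy.
  rewrite IH //; last by rewrite ltnS in hn; exact: leq_trans hzy hn.
  by move=> h; apply: leq_trans h; apply: eq_leq; exact: e.
Qed.


Lemma rl0 s : rest_level a fset0 s = 0%N.
Proof. by apply/eqP; rewrite -leqn0; apply/rl_leP => x; rewrite in_fset0. Qed.

Lemma img0_id (Q : config) : valid Q -> img fset0 Q = Q.
Proof.
move=> vQ.
have H : forall y, y \in Q -> Lam fset0 Q y = y.2.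
  move=> y yQ; have := @Lam_id Q fset0 vQ (fsub0set _) _ y.
  rewrite fsetD0; apply => //; by move=> x z; rewrite in_fset0.
apply/fsetP => w; apply/imgP/idP => [[y yQ ->]|wQ].
  by rewrite H // -surjective_pairing.
by exists w => //; rewrite H // -surjective_pairing.
Qed.

Definition downclb (p J : config) : bool :=
  all (fun x => all (fun y => (conc y.1 x.1 && (y.2 < x.2)%N) ==> (y \in J))
     (enum_fset p)) (enum_fset J).

Lemma downclbP p J : reflect (downcl p J) (downclb p J).
Proof.
apply: (iffP allP) => H.
- move=> x y xJ yp cyx hyx.
  by have /allP /(_ y yp) := H x xJ; rewrite cyx hyx.
- move=> x xJ; apply/allP => y yp; apply/implyP => /andP [c h].
  exact: (H x y).
Qed.

Definition nonnegb (J : config) : bool := all (fun x => 0 <= x.1) (enum_fset J).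

Definition Ipart (p : config) : config :=
  [fset x in p | has (fun J : config => (x \in J) && downclb p J && nonnegb J)
     (enum_fset (fpowerset p))].

Lemma IpartP p x : reflect (exists J : config,
   [/\ J `<=` p, x \in J, downcl p J & forall y, y \in J -> 0 <= y.1])
  (x \in Ipart p).
Proof.
rewrite /Ipart !inE /=; apply: (iffP andP).
- move=> [xp /hasP [J]]; rewrite fpowersetE => Jp /andP [/andP [xJ /downclbP dJ] /allP nJ].
  by exists J.
- move=> [J [Jp xJ dJ nJ]]; split; first by apply: (fsubsetP Jp).
  apply/hasP; exists J; first by rewrite fpowersetE.
  by rewrite xJ /=; apply/andP; split; [apply/downclbP | apply/allP].
Qed.

Lemma Ipart_sub p : Ipart p `<=` p.
Proof. by apply/fsubsetP => x /IpartP [J [/fsubsetP Jp xJ _ _]]; apply: Jp. Qed.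

Lemma Ipart_down p : downcl p (Ipart p).
Proof.
move=> x y /IpartP [J [Jp xJ dJ nJ]] yp cyx hyx.
by apply/IpartP; exists J; split => //; apply: (dJ x).
Qed.

Lemma Ipart_nonneg p y : y \in Ipart p -> 0 <= y.1.
Proof. by move=> /IpartP [J [_ yJ _ nJ]]; apply: nJ. Qed.

Lemma Ipart_max p J : J `<=` p -> downcl p J -> (forall y, y \in J -> 0 <= y.1) ->
  J `<=` Ipart p.
Proof. by move=> Jp dJ nJ; apply/fsubsetP => x xJ; apply/IpartP; exists J. Qed.

Lemma bottomP (H : config) x : (x \in bottom_pieces H) = (x \in H) && (x.2 == 0%N).
Proof. by rewrite /bottom_pieces !inE. Qed.

Definition pyr_at (p : config) (b : int) := valid p /\ bottom_pieces p = [fset (b, 0%N)].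

Lemma pyr_atP p b : pyr_at p b <-> is_pyramid a p /\ (b, 0%N) \in p.
Proof.
split.
- move=> [vp bp]; split; first by split; [apply/heapP | rewrite bp cardfs1].
  have : (b, 0%N) \in bottom_pieces p by rewrite bp in_fset1.
  by rewrite bottomP => /andP [].
- move=> [[/heapP vp /eqP /cardfs1P [x ex]] bp]; split => //.
  have : (b, 0%N) \in bottom_pieces p by rewrite bottomP bp.
  by rewrite ex in_fset1 => /eqP <-.
Qed.

Lemma pyr_bot p b y : pyr_at p b -> y \in p -> y.2 = 0%N -> y = (b, 0%N).
Proof.
move=> [_ bp] yp y0; have : y \in bottom_pieces p by rewrite bottomP yp y0 eqxx.
by rewrite bp in_fset1 => /eqP.
Qed.

Lemma pyr_in p b : pyr_at p b -> (b, 0%N) \in p.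
Proof. by move=> /pyr_atP []. Qed.


Lemma valid_AF p : valid p -> AF p.
Proof. by case. Qed.

Lemma AF_sub p q : AF p -> q `<=` p -> AF q.
Proof. by move=> af /fsubsetP qp x y xq yq; apply: af; apply: qp. Qed.

Lemma fsetUDK' (I p : config) : I `<=` p -> I `|` (p `\` I) = p.
Proof.
move=> /fsubsetP Ip; apply/fsetP => w; rewrite in_fsetU in_fsetD.
by case wI: (w \in I) => //=; apply/esym/Ip.
Qed.

Section Decomp.
Variable p : config.
Hypothesis pp : pyr_at p 0.

Local Notation I := (Ipart p).
Local Notation R := (p `\` Ipart p).

Lemma vp : valid p. Proof. by case: pp. Qed.

Lemma zero_in_I : (0, 0%N) \in I.
Proof.
apply/IpartP; exists [fset (0, 0%N)]; split.
- by rewrite fsub1set; apply: pyr_in pp.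
- by rewrite in_fset1.
- by move=> x y; rewrite in_fset1 => /eqP -> /=.
- by move=> y; rewrite in_fset1 => /eqP ->.
Qed.

Lemma valid_I : valid I.
Proof.
have [sup af] := vp; split.
- move=> x xI hp; have xp : x \in p by apply: (fsubsetP (Ipart_sub p)).
  have [y yp [cy ey]] := sup x xp hp; exists y => //.
  by apply: (Ipart_down xI yp cy); rewrite ey; case: (x.2) hp.
- exact: AF_sub af (Ipart_sub p).
Qed.

Lemma bottom_I : bottom_pieces I = [fset (0, 0%N)].
Proof.
apply/fsetP => w; rewrite bottomP in_fset1; apply/andP/eqP.
- move=> [wI /eqP w0]; apply: (pyr_bot pp) => //.
  exact: (fsubsetP (Ipart_sub p)).
- by move=> ->; rewrite zero_in_I.
Qed.

Lemma AF_R : AF R.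
Proof. by apply: AF_sub (valid_AF vp) _; apply: fsubsetDl. Qed.

Definition minimal y := y \in R /\ forall z, z \in R -> conc z.1 y.1 -> ~ (z.2 < y.2)%N.

Lemma minimal_Lam y : y \in R -> (Lam fset0 R y = 0%N <-> minimal y).
Proof.
move=> yR; split.
- move=> L0; split => // z zR czy hzy.
  by have := @Lam_lt fset0 R y z zR czy hzy; rewrite L0.
- move=> [_ m]; apply/eqP; rewrite -leqn0; apply: Lam_le; first by rewrite rl0.
  by move=> z zR czy hzy; case: (m z zR czy hzy).
Qed.

Lemma minimal_pos y : minimal y -> -(a%:Z) < y.1 /\ y.1 < 0.
Proof.
move=> [yR m]; move: (yR); rewrite in_fsetD => /andP [yI yp].
have [sup af] := vp.
have y2 : (0 < y.2)%N.
  case: (posnP y.2) => // y0.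
  by move: yI; rewrite (pyr_bot pp yp y0) zero_in_I.
have [z zp [czy ez]] := sup y yp y2.
have hzy : (z.2 < y.2)%N by rewrite ez; case: (y.2) y2.
have zI : z \in I.
  apply: contraT => zI; case: (m z _ czy hzy) => //.
  by rewrite in_fsetD zI zp.
have z0 := Ipart_nonneg zI.
split.
  by move: czy; rewrite /concurrent; lia.
rewrite ltNge; apply/negP => y0.
move: yI; apply/negP; rewrite negbK.
have : y |` I `<=` Ipart p.
  apply: Ipart_max.
  - by rewrite fsubUset fsub1set yp Ipart_sub.
  - move=> x w; rewrite in_fset1U => /orP [/eqP ->|xI] wp cwx hwx.
      apply: contraT => wI; rewrite in_fset1U negb_or in wI.
      case/andP: wI => _ wI.
      by case: (m w _ cwx hwx); rewrite in_fsetD wI wp.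
    by rewrite in_fset1U (Ipart_down xI wp cwx hwx) orbT.
  - by move=> w; rewrite in_fset1U => /orP [/eqP ->|/Ipart_nonneg].
by move/fsubsetP; apply; rewrite in_fset1U eqxx.
Qed.

Lemma minimal_uniq y y' : minimal y -> minimal y' -> y = y'.
Proof.
move=> my my'; have [h1 h2] := minimal_pos my; have [h1' h2'] := minimal_pos my'.
have c : conc y.1 y'.1 by rewrite /concurrent; lia.
case: my my' => yR m [y'R m'].
case: (ltngtP y.2 y'.2) => h.
- by case: (m' y yR c h).
- by case: (m y' y'R _ h); rewrite conc_sym.
- exact: AF_R.
Qed.

Lemma minimal_ex : R != fset0 -> exists y, minimal y.
Proof.
move=> /fset0Pn [y0 y0R].
suff H : forall n y, (y.2 < n)%N -> y \in R -> exists y, minimal y by exact: H y0R.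
elim=> [//|n IH] y hn yR.
case: (boolP [exists z : R, conc (val z).1 y.1 && ((val z).2 < y.2)%N]).
- move=> /existsP [[z zR] /= /andP [czy hzy]].
  by apply: (IH z) => //; rewrite ltnS in hn; exact: leq_trans hzy hn.
- move=> /existsPn H; exists y; split => // z zR czy hzy.
  by have := H [` zR]; rewrite /= czy hzy.
Qed.

Lemma pyr_Q y0 : minimal y0 -> pyr_at (img fset0 R) y0.1.
Proof.
move=> m0; split.
  by have := valid_prod valid0 AF_R; rewrite fset0U.
apply/fsetP => w; rewrite bottomP in_fset1; apply/andP/eqP.
- move=> [/imgP [y yR ->] /= /eqP L0].
  have my := (minimal_Lam yR).1 L0.
  by move: L0; rewrite (minimal_uniq my m0) => ->.
- move=> ->; have y0R : y0 \in R by case: m0.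
  have := img_in fset0 y0R; rewrite ((minimal_Lam y0R).2 m0) => -> /=.
  by [].
Qed.

Lemma p_decomp : p = I `|` img I (img fset0 R).
Proof.
rewrite img_img; last exact: AF_R.
have -> : img I R = R.
  apply/fsetP => w; apply/imgP/idP => [[y yR ->]|wR].
    rewrite (Lam_id vp (Ipart_sub p) (@Ipart_down p) yR).
    by rewrite -surjective_pairing.
  exists w => //.
  by rewrite (Lam_id vp (Ipart_sub p) (@Ipart_down p) wR) -surjective_pairing.
by rewrite fsetUDK' // Ipart_sub.
Qed.

Lemma card_decomp : #|` p| = (#|` I| + #|` img fset0 R|)%N.
Proof.
by rewrite {1}p_decomp card_prod ?card_img //; [exact: AF_R|
   have := valid_prod valid0 AF_R; rewrite fset0U => -[]].
Qed.

End Decomp.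


Section Build.
Variables (P1 Q : config) (b : int).
Hypotheses (pP : pyr_at P1 0) (nP : forall y, y \in P1 -> 0 <= y.1)
  (pQ : pyr_at Q b) (hb1 : -(a%:Z) < b) (hb2 : b < 0).

Local Notation W := (P1 `|` img P1 Q).

Lemma vQ : valid Q. Proof. by case: pQ. Qed.
Lemma vP : valid P1. Proof. by case: pP. Qed.

Lemma valid_W : valid W.
Proof. exact: valid_prod vP (valid_AF vQ). Qed.

Lemma rl_b : (0 < rest_level a P1 b)%N.
Proof.
have := @rl_ge P1 b (0, 0%N) (pyr_in pP); apply.
by rewrite /concurrent /=; lia.
Qed.

Lemma pyr_W : pyr_at W 0.
Proof.
split; first exact: valid_W.
apply/fsetP => w; rewrite bottomP in_fset1; apply/andP/eqP.
- rewrite in_fsetU => -[/orP [wP|/imgP [y yQ ->]] /eqP w0].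
    exact: (pyr_bot pP).
  move: w0 => /= L0; exfalso.
  have [sup af] := vQ.
  case: (posnP y.2) => y2.
    move: L0; rewrite (pyr_bot pQ yQ y2) => L0.
    by have := Lam_rl P1 Q (b, 0%N); rewrite L0 leqn0 /= => /eqP e; move: rl_b; rewrite e.
  have [z zQ [czy ez]] := sup y yQ y2.
  have hzy : (z.2 < y.2)%N by rewrite ez; case: (y.2) y2.
  by have := @Lam_lt P1 Q y z zQ czy hzy; rewrite L0.
- by move=> ->; rewrite in_fsetU (pyr_in pP).
Qed.

Lemma W_minus : W `\` P1 = img P1 Q.
Proof.
apply/fsetP => w; rewrite in_fsetD in_fsetU.
case wP: (w \in P1) => /=; last by [].
by apply/esym/negbTE/img_notin.
Qed.

Lemma Ipart_W : Ipart W = P1.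
Proof.
apply/eqP; rewrite eqEfsubset; apply/andP; split; last first.
  apply: Ipart_max => //; first exact: fsubsetUl.
  move=> x w xP; rewrite in_fsetU => /orP [wP //|/imgP [y yQ ->]] /= cyx hyx.
  exfalso; have := @rl_ge P1 y.1 x xP; rewrite conc_sym cyx => /(_ isT) h.
  by have := leq_trans (leq_trans hyx (ltnW h)) (Lam_rl P1 Q y); rewrite ltnn.
apply/fsubsetP => x xI; apply: contraT => xP.
have : x \in W by apply: (fsubsetP (Ipart_sub W)).
rewrite in_fsetU (negbTE xP) /= => /imgP [y yQ ex].
have [sup af] := vQ.
suff : (b, Lam P1 Q (b, 0%N)) \in Ipart W.
  by move/Ipart_nonneg => /=; lia.
suff H : forall n y, (y.2 < n)%N -> y \in Q -> (y.1, Lam P1 Q y) \in Ipart W ->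
  (b, Lam P1 Q (b, 0%N)) \in Ipart W by apply: (H _ y (ltnSn _) yQ); rewrite -ex.
elim=> [//|n IH] y0 hn y0Q yI.
case: (posnP y0.2) => y2.
  by move: yI; rewrite (pyr_bot pQ y0Q y2).
have [z zQ [czy ez]] := sup y0 y0Q y2.
have hzy : (z.2 < y0.2)%N by rewrite ez; case: (y0.2) y2.
apply: (IH z) => //; first by rewrite ltnS in hn; exact: leq_trans hzy hn.
apply: (Ipart_down yI) => /=; last exact: Lam_lt.
  by rewrite in_fsetU img_in ?orbT.
by [].
Qed.

Lemma Q_back : img fset0 (W `\` P1) = Q.
Proof. by rewrite W_minus img_img ?img0_id //; [exact: vQ | exact: valid_AF vQ]. Qed.

Lemma card_W : #|` W| = (#|` P1| + #|` Q|)%N.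
Proof. exact: card_prod (valid_AF vQ). Qed.

End Build.


Definition bpos (Q : config) : int := head 0 [seq x.1 | x <- enum_fset (bottom_pieces Q)].

Lemma bposE Q b : pyr_at Q b -> bpos Q = b.
Proof. by move=> [_ e]; rewrite /bpos e -fset_seq1. Qed.

Definition phi (c : int) (x : piece) : piece := (c - x.1 - a%:Z, x.2).
Definition Phi (c : int) (H : config) : config := [fset phi c x | x in H].

Lemma phiK c : involutive (phi c).
Proof. move=> [s h]; rewrite /phi /=; congr pair; lia. Qed.

Lemma Phi_in c H x : (x \in Phi c H) = (phi c x \in H).
Proof.
apply/imfsetP/idP => [[y yH ->]|xH]; first by rewrite phiK.
by exists (phi c x) => //; rewrite phiK.
Qed.

Lemma PhiK c H : Phi c (Phi c H) = H.
Proof. by apply/fsetP => x; rewrite !Phi_in phiK. Qed.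

Lemma card_Phi c H : #|` Phi c H| = #|` H|.
Proof. by apply/eqP/card_in_imfsetP => x y _ _; apply: (can_inj (phiK c)). Qed.

Lemma conc_phi c x y : conc (phi c x).1 (phi c y).1 = conc x.1 y.1.
Proof. by rewrite /concurrent /phi /=; apply/idP/idP; lia. Qed.

Lemma valid_Phi c H : valid H -> valid (Phi c H).
Proof.
move=> [sup af]; split.
- move=> x; rewrite Phi_in => xH hp; have [y yH [cy ey]] := sup _ xH hp.
  exists (phi c y); first by rewrite Phi_in phiK.
  by split => //; rewrite -(conc_phi c) phiK.
- move=> x y; rewrite !Phi_in => xH yH cxy exy.
  apply: (can_inj (phiK c)); apply: af => //; by rewrite conc_phi.
Qed.

Lemma valid_PhiE c H : valid (Phi c H) <-> valid H.
Proof. by split => [h|/valid_Phi //]; rewrite -(PhiK c H); apply: valid_Phi. Qed.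

Lemma bottom_Phi c H : bottom_pieces (Phi c H) = Phi c (bottom_pieces H).
Proof. by apply/fsetP => x; rewrite bottomP !Phi_in bottomP. Qed.

Lemma Phi1 c x : Phi c [fset x] = [fset phi c x].
Proof. by apply/fsetP => y; rewrite Phi_in !in_fset1; apply/eqP/eqP => [<-|->]; rewrite phiK. Qed.

Lemma is_pyramid_Phi c H : is_pyramid a (Phi c H) <-> is_pyramid a H.
Proof.
rewrite /is_pyramid !heapP valid_PhiE bottom_Phi card_Phi; by [].
Qed.

Lemma pyr_at_Phi c H t : pyr_at (Phi c H) t <-> pyr_at H (c - t - a%:Z).
Proof.
rewrite !pyr_atP is_pyramid_Phi Phi_in /phi /=; split => -[h1 h2]; split => //.
Qed.

Lemma right_Phi c s H : right_pyramid a s (Phi c H) <-> left_pyramid a (c - s) H.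
Proof.
split.
- move=> [h1 h2 h3]; split.
  + by rewrite -(is_pyramid_Phi c).
  + by move: h2; rewrite Phi_in /phi /=.
  + move=> x xH; have := h3 (phi c x); rewrite Phi_in phiK => /(_ xH) /=; lia.
- move=> [h1 h2 h3]; split.
  + by rewrite is_pyramid_Phi.
  + by rewrite Phi_in /phi /=.
  + move=> x; rewrite Phi_in => /h3 /=; lia.
Qed.

Lemma left_Phi c s H : left_pyramid a s (Phi c H) <-> right_pyramid a (c - s) H.
Proof.
split.
- move=> [h1 h2 h3]; split.
  + by rewrite -(is_pyramid_Phi c).
  + move: h2; rewrite Phi_in /phi /=.
    by rewrite (_ : c - (s - a%:Z) - a%:Z = c - s) //; lia.
  + move=> x xH; have := h3 (phi c x); rewrite Phi_in phiK => /(_ xH) /=; lia.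
- move=> [h1 h2 h3]; split.
  + by rewrite is_pyramid_Phi.
  + rewrite Phi_in /phi /=.
    by rewrite (_ : c - (s - a%:Z) - a%:Z = c - s) //; lia.
  + move=> x; rewrite Phi_in => /h3 /=; lia.
Qed.


Definition T (c : int) (x : config * int) : config * int := (Phi c x.1, c - x.2).

Lemma TK c : involutive (T c).
Proof. by move=> [P s]; rewrite /T /= PhiK; congr pair; lia. Qed.

Lemma pyr_size H : is_pyramid a H -> (0 < #|` H|)%N.
Proof.
move=> [_ h]; apply: leq_trans (_ : #|` bottom_pieces H| <= _)%N; first by rewrite h.
by apply: fsubset_leq_card; apply/fsubsetP => x; rewrite bottomP => /andP [].
Qed.

Lemma cc (c s : int) : c - (c - s) = s.
Proof. lia. Qed.

Lemma right_Phi2 c s H : left_pyramid a s H -> right_pyramid a (c - s) (Phi c H).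
Proof. by move=> h; apply/right_Phi; rewrite cc. Qed.

Lemma left_Phi2 c s H : right_pyramid a s H -> left_pyramid a (c - s) (Phi c H).
Proof. by move=> h; apply/left_Phi; rewrite cc. Qed.

Lemma GScons m q P c : good_seq a m q -> right_pyramid a 0 P ->
  1 <= c <= a%:Z - 1 -> good_seq a (#|` P| + m) ((P, 0) :: map (T c) q).
Proof.
move=> [h1 h2 h3 h4 h5] hP hc; split => //.
- case=> [|i] /= hi //; rewrite size_map in hi.
  rewrite (nth_map dflt) //; have := h2 i hi.
  case: (odd i) => /= h.
    by apply/right_Phi; rewrite cc.
  by apply/left_Phi; rewrite cc.
- rewrite big_cons big_map; congr addn; rewrite -h3; apply: eq_bigr => x _.
  by rewrite /hsize card_Phi.
- case=> [|i] /= hi.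
    rewrite (nth_map dflt) //= h4; move: hc; lia.
  rewrite size_map in hi; rewrite (nth_map dflt) ?(nth_map dflt) //=; last exact: ltnW.
  have := h5 i hi => /=; case: (odd i) => /=; lia.
Qed.

Lemma GSinv m q : good_seq a m q -> (1 < size q)%N ->
  let P := (nth dflt q 0).1 in let c := (nth dflt q 1).2 in
  [/\ q = (P, 0) :: map (T c) (map (T c) (behead q)), right_pyramid a 0 P,
      1 <= c <= a%:Z - 1, good_seq a (m - #|` P|) (map (T c) (behead q)) &
      (#|` P| < m)%N].
Proof.
case: q => [|[P s] [|[P2 c] r]] //= [h1 h2 h3 h4 h5] _.
rewrite /= in h4; subst s.
have hr := h2 0%N isT; rewrite /= in hr.
have hc := h5 0%N isT; rewrite /= in hc.
have hP2 : (0 < #|` P2|)%N.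
  by have := h2 1%N isT => /= -[h _ _]; exact: pyr_size.
split => //.
- by rewrite TK (mapK (TK c)).
- by rewrite subr0 in hc.
- split => //.
  + case=> [|i] hi.
      by rewrite /=; apply/right_Phi; rewrite cc; exact: (h2 1%N isT).
    rewrite /= size_map in hi; rewrite /= (nth_map dflt) //.
    have := h2 i.+2 hi => /=; rewrite negbK.
    case: (odd i) => /= h.
      by apply: right_Phi2.
    by apply: left_Phi2.
  + move: h3; rewrite big_cons => <-; rewrite addKn -map_cons big_map.
    by apply: eq_bigr => x _; rewrite /hsize card_Phi.
  + by rewrite /= subrr.
  + case=> [|i] hi.
      have := h5 1%N; rewrite /= size_map in hi.
      move: hi; case: r {h1 h2 h3 h5} => [//|x r'] _ /= /(_ isT).
      rewrite /T /=; lia.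
    rewrite /= size_map in hi.
    rewrite /= (nth_map dflt) ?(nth_map dflt) //=; try exact: ltnW.
    have := h5 i.+2 hi => /=; rewrite negbK; case: (odd i) => /=; lia.
- move: h3; rewrite big_cons big_cons => <-; rewrite /hsize /=.
  by rewrite -{1}(addn0 #|` P|) ltn_add2l; apply: leq_trans hP2 (leq_addr _ _).
Qed.


Fixpoint dec (n : nat) (p : config) : seq (config * int) :=
  if n is n'.+1 then
    if p `\` Ipart p == fset0 then [:: (Ipart p, 0)]
    else (Ipart p, 0) :: map (T (bpos (img fset0 (p `\` Ipart p)) + a%:Z))
           (dec n' (Phi (bpos (img fset0 (p `\` Ipart p)) + a%:Z) (img fset0 (p `\` Ipart p))))
  else [::].

Lemma pyr0P k p : pyramid0 a k p <-> pyr_at p 0 /\ #|` p| = k.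
Proof.
split; first by move=> [h1 h2 h3]; split => //; apply/pyr_atP.
by move=> [/pyr_atP [h1 h2] h3].
Qed.

Lemma right_I p : pyr_at p 0 -> right_pyramid a 0 (Ipart p).
Proof.
move=> pp; split.
- by have [] := (pyr_atP (Ipart p) 0).1 (conj (valid_I pp) (bottom_I pp)).
- exact: zero_in_I.
- by move=> x /Ipart_nonneg.
Qed.

Lemma Ipart_full p : pyr_at p 0 -> p `\` Ipart p == fset0 -> Ipart p = p.
Proof.
move=> pp; rewrite fsetD_eq0 => h; apply/eqP; rewrite eqEfsubset h Ipart_sub //.
Qed.

Lemma decomp_info p : pyr_at p 0 -> p `\` Ipart p != fset0 ->
  exists b, [/\ pyr_at (img fset0 (p `\` Ipart p)) b, -(a%:Z) < b, b < 0 &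
     bpos (img fset0 (p `\` Ipart p)) = b].
Proof.
move=> pp hR; have [y0 m0] := minimal_ex hR.
have [h1 h2] := minimal_pos pp m0.
have pQ := pyr_Q pp m0.
by exists y0.1; split => //; apply: bposE.
Qed.

Lemma pyr_Phi_b Q b : pyr_at Q b -> pyr_at (Phi (b + a%:Z) Q) 0.
Proof.
by move=> h; apply/pyr_at_Phi; rewrite (_ : b + a%:Z - 0 - a%:Z = b) //; lia.
Qed.

Lemma dec_good n : forall k p, (k <= n)%N -> pyramid0 a k p -> good_seq a k (dec n p).
Proof.
elim: n => [|n IH] k p hk /pyr0P [pp hp].
  by move: (pyr_size (proj1 ((pyr_atP _ _).1 pp))); rewrite hp; case: k hk hp.
rewrite /=; case: ifP => hR.
  have e := Ipart_full pp hR; rewrite e.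
  have hr : right_pyramid a 0 p by rewrite -e; exact: right_I.
  split => //.
  - by case=> [|i] //= _.
  - by rewrite big_cons big_nil addn0 -hp.
have [b [pQ hb1 hb2 eb]] := decomp_info pp (negbT hR).
rewrite eb.
set Q := img fset0 (p `\` Ipart p) in pQ *.
have hk' := card_decomp pp.
have I1 : (0 < #|` Ipart p|)%N.
  by rewrite cardfs_gt0; apply/fset0Pn; exists (0, 0%N); exact: zero_in_I pp.
rewrite -/Q in hk'; rewrite -hp hk'.
apply: GScons; last by apply/andP; split; lia.
  apply: IH; last by apply/pyr0P; split; [exact: pyr_Phi_b | rewrite card_Phi].
  by move: hk; rewrite -hp hk'; lia.
exact: right_I.
Qed.


Lemma gs_pos k q : good_seq a k q -> (0 < k)%N.
Proof.
case: q => [|[P s] r] [h1 h2 h3 h4 h5] //.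
have [hP _ _] := h2 0%N isT; move: (pyr_size hP); rewrite -h3 big_cons /hsize /=.
by move=> h; apply: leq_trans h (leq_addr _ _).
Qed.

Lemma dec_size n k p : (k <= n)%N -> pyramid0 a k p -> (0 < size (dec n p))%N.
Proof. by move=> hk hp; have [] := dec_good hk hp. Qed.

Lemma dec_head n k p : (k <= n)%N -> pyramid0 a k p -> (nth dflt (dec n p) 0).2 = 0.
Proof. by move=> hk hp; have [] := dec_good hk hp. Qed.

Lemma dec_inj n : forall k p p', (k <= n)%N -> pyramid0 a k p -> pyramid0 a k p' ->
  dec n p = dec n p' -> p = p'.
Proof.
elim: n => [|n IH] k p p' hk h h' e; first by move: (gs_pos (dec_good hk h)); rewrite leqn0 in hk; rewrite (eqP hk).

have [pp hp] := (pyr0P _ _).1 h; have [pp' hp'] := (pyr0P _ _).1 h'.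
move: e; rewrite /=; case: ifP => hR; case: ifP => hR'.
- move=> [e]; by rewrite -(Ipart_full pp hR) -(Ipart_full pp' hR') e.
- move=> [_ /esym /eqP]; rewrite -size_eq0 size_map.
  have [b [pQ hb1 hb2 eb]] := decomp_info pp' (negbT hR').
  have hk' := card_decomp pp'.
  have I1 : (0 < #|` Ipart p'|)%N.
    by rewrite cardfs_gt0; apply/fset0Pn; exists (0, 0%N); exact: zero_in_I pp'.
  rewrite eb => /eqP e0; exfalso; move: e0; apply/eqP; rewrite -lt0n; apply: (@dec_size _ #|` img fset0 (p' `\` Ipart p')|).
    by move: hk; rewrite -hp' hk'; lia.
  by apply/pyr0P; split; [exact: pyr_Phi_b | rewrite card_Phi].
- move=> [_ /eqP]; rewrite -size_eq0 size_map.
  have [b [pQ hb1 hb2 eb]] := decomp_info pp (negbT hR).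
  have hk' := card_decomp pp.
  have I1 : (0 < #|` Ipart p|)%N.
    by rewrite cardfs_gt0; apply/fset0Pn; exists (0, 0%N); exact: zero_in_I pp.
  rewrite eb => /eqP e0; exfalso; move: e0; apply/eqP; rewrite -lt0n; apply: (@dec_size _ #|` img fset0 (p `\` Ipart p)|).
    by move: hk; rewrite -hp hk'; lia.
  by apply/pyr0P; split; [exact: pyr_Phi_b | rewrite card_Phi].
have [b [pQ hb1 hb2 eb]] := decomp_info pp (negbT hR).
have [b' [pQ' hb1' hb2' eb']] := decomp_info pp' (negbT hR').
rewrite eb eb'.
set Q := img fset0 (p `\` Ipart p) in pQ *.
set Q' := img fset0 (p' `\` Ipart p') in pQ' *.
have hk1 := card_decomp pp; have hk2 := card_decomp pp'.
rewrite -/Q in hk1; rewrite -/Q' in hk2.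
have I1 : (0 < #|` Ipart p|)%N.
  by rewrite cardfs_gt0; apply/fset0Pn; exists (0, 0%N); exact: zero_in_I pp.
move=> [eI e].
have hkQ : (#|` Q| <= n)%N by move: hk; rewrite -hp hk1; lia.
have hQ' : #|` Q'| = #|` Q| by move: hp'; rewrite hk2 -hp hk1 eI; lia.
have hX : pyramid0 a #|` Q| (Phi (b + a%:Z) Q).
  by apply/pyr0P; split; [exact: pyr_Phi_b | rewrite card_Phi].
have hX' : pyramid0 a #|` Q| (Phi (b' + a%:Z) Q').
  by apply/pyr0P; split; [exact: pyr_Phi_b | rewrite card_Phi].
have ec : b + a%:Z = b' + a%:Z.
  have := congr1 (fun l => (nth dflt l 0).2) e => /=.
  rewrite (nth_map dflt) ?(nth_map dflt); [|exact: dec_size hkQ hX'|exact: dec_size hkQ hX].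
  rewrite /T /= (dec_head hkQ hX) (dec_head hkQ hX'); lia.
rewrite -ec in e hX'.
have e2 := congr1 (map (T (b + a%:Z))) e; rewrite !(mapK (TK _)) in e2.
have eX := IH _ _ _ hkQ hX hX' e2.
have eQ : Q = Q' by rewrite -(PhiK (b + a%:Z) Q) eX PhiK.
by rewrite (p_decomp pp) (p_decomp pp') -/Q -/Q' eQ eI.
Qed.

Lemma Ipart_self P : right_pyramid a 0 P -> Ipart P = P.
Proof.
move=> [_ _ hn]; apply/eqP; rewrite eqEfsubset Ipart_sub /=.
apply: Ipart_max => //; by move=> x y _ yP.
Qed.

Lemma dec_surj n : forall k q, (k <= n)%N -> good_seq a k q ->
  exists2 p, pyramid0 a k p & dec n p = q.
Proof.
elim: n => [|n IH] k q hk g.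
  by move: (gs_pos g) hk; case: k {g}.
case: (ltnP 1 (size q)) => hs; last first.
  case: g => h1 h2 h3 h4 h5; case: q hs h1 h2 h3 h4 h5 => [|[P s] [|??]] //= _ _ h2 h3 h4 _.
  rewrite /= in h4; subst s.
  have hr := h2 0%N isT; rewrite /= in hr.
  exists P.
    apply/pyr0P; split; first by case: hr => hP hin _; apply/pyr_atP.
    by rewrite -h3 big_cons big_nil addn0.
  rewrite /= Ipart_self //.
  by have -> : P `\` P == fset0 by rewrite fsetD_eq0 fsubset_refl.
have [eq hr hc g' hPk] := GSinv g hs.
set P := (nth dflt q 0).1 in eq hr g' hPk.
set c := (nth dflt q 1).2 in eq hc g'.
have P1 : (0 < #|` P|)%N by case: hr => hP _ _; exact: pyr_size hP.
have hk' : (k - #|` P| <= n)%N by move: hk hPk P1; move: (#|` P|) => x; lia.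
have [X hX eX] := IH _ _ hk' g'.
have [pX cX] := (pyr0P _ _).1 hX.
have k'pos := gs_pos g'.
have pP : pyr_at P 0 by case: hr => hP hin _; apply/pyr_atP.
have nP : forall y, y \in P -> 0 <= y.1 by case: hr.
pose Q := Phi c X.
have pQ : pyr_at Q (c - a%:Z).
  by apply/pyr_at_Phi; rewrite (_ : c - (c - a%:Z) - a%:Z = 0) //; lia.
have hb1 : -(a%:Z) < c - a%:Z by lia.
have hb2 : c - a%:Z < 0 by lia.
exists (P `|` img P Q).
  apply/pyr0P; split; first exact: pyr_W pP pQ hb1 hb2.
  by rewrite (card_W P pQ) /Q card_Phi cX; lia.
rewrite /= (Ipart_W nP pQ hb1 hb2) (Q_back P pQ) W_minus.
have -> : (img P Q == fset0) = false.
  apply/negbTE; rewrite -cardfs_gt0 card_img; last exact: valid_AF (vQ pQ).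
  by rewrite /Q card_Phi cX.
rewrite (bposE pQ) (_ : c - a%:Z + a%:Z = c); last by lia.
by rewrite /Q PhiK eX -eq.
Qed.

End Basics.

Theorem lemma4 (a m : nat) : (3 <= a)%N -> (1 <= m)%N ->
  bij_between (pyramid0 a m) (good_seq a m).
Proof.
move=> ha hm; have a0 : (0 < a)%N by lia.
exists (dec a m); split.
- by move=> p hp; apply: dec_good.
- by move=> p p' hp hp' e; apply: (dec_inj a0 (leqnn m) hp hp' e).
- by move=> q hq; have [p hp e] := dec_surj a0 (leqnn m) hq; exists p.
Qed.
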